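(* Consider an $N$-player quadratic potential game under the disturbed gradient-based learning dynamics described in the context. For players $i\neq j$, player $i$ is disturbance decoupled from player $j$ if and only if player $j$ is disturbance decoupled from player $i$.
   Context: There are $N$ players, indexed by $[N]$; player $\ell$ has action $x_\ell\in\mathbb{R}^{n_\ell}$, $n=\sum_\ell n_\ell$. A quadratic game has costs $f_\ell(x)=\tfrac12 x_\ell^\top P_\ell x_\ell + x_\ell^\top\big(\sum_{m\neq \ell}P_{\ell m}x_m + r_\ell\big)$ with $P_\ell$ symmetric, $P_{\ell m}\in\mathbb{R}^{n_\ell\times n_m}$, $r_\ell\in\mathbb{R}^{n_\ell}$; it is a quadratic potential game if $P_{\ell m}=P_{m\ell}^\top$ for all $\ell\neq m$. Each player $\ell$ has step size $\gamma_\ell>0$ and updates $x_\ell^{k+1}=x_\ell^k-\gamma_\ell\big(D_\ell f_\ell(x^k)+d_\ell^k\big)$ with $D_\ell f_\ell=\partial f_\ell/\partial x_\ell$ and $d^k_\ell$ an arbitrary additive disturbance. Let $W$ be the block matrix with $W_{\ell\ell}=I-\gamma_\ell P_\ell$, $W_{\ell m}=-\gamma_\ell P_{\ell m}$, $\Gamma=\mathrm{blkdiag}(\gamma_1 I_{n_1},\ldots,\gamma_N I_{n_N})$, $\bar r=(r_1,\ldots,r_N)$. For a player $a$, let $\mathcal{D}_a=\{d\in\mathbb{R}^n : d_m=0\ \forall m\neq a\}$. The uncorrupted and corrupted dynamics (disturbance in player $a$'s gradient) are $x^{k+1}=Wx^k-\Gamma\bar r$ and $y^{k+1}=Wy^k-\Gamma\bar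 r-\Gamma d^k$ with $d^k\in\mathcal{D}_a$. Player $b\neq a$ is disturbance decoupled from player $a$ if for every initial $x^0$, with $y^0=x^0$, one has $y_b^k=x_b^k$ for all $k\ge0$ and all disturbance sequences with $d^k\in\mathcal{D}_a$. *)

(* Defs.v *)
From HB Require Import structures.
From mathcomp Require Import all_boot all_order all_algebra.
From mathcomp Require Import reals.
Set Implicit Arguments. Unset Strict Implicit. Unset Printing Implicit Defensive.
Import Order.TTheory GRing.Theory Num.Theory.
Local Open Scope ring_scope.

Section Game.
Variables (R : realType) (N : nat) (n : 'I_N -> nat).

Definition state := forall l : 'I_N, 'cV[R]_(n l).

(* Quadratic game data: P l = P_l, Pc l m = P_{lm} (only used for l <> m),
   r l = r_l; gamma l = step size of player l. *)
Variables (P : forall l : 'I_N, 'M[R]_(n l))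
          (Pc : forall l m : 'I_N, 'M[R]_(n l, n m))
          (r : forall l : 'I_N, 'cV[R]_(n l))
          (gamma : 'I_N -> R).

Definition partial_grad (x : state) (l : 'I_N) : 'cV[R]_(n l) :=
  P l *m x l + \sum_(m < N | m != l) Pc l m *m x m + r l.

(* One step of the disturbed gradient dynamics:
   x_l^{k+1} = x_l^k - gamma_l (D_l f_l(x^k) + d_l^k),
   i.e. blockwise x^{k+1} = W x^k - Gamma rbar - Gamma d^k. *)
Definition step (x d : state) : state :=
  fun l => x l - gamma l *: (partial_grad x l + d l).

Fixpoint traj (x0 : state) (d : nat -> state) (k : nat) : state :=
  match k with
  | 0 => x0
  | k'.+1 => step (traj x0 d k') (d k')
  end.

Definition zero_dist : nat -> state := fun _ l => 0.

Definition in_Da (a : 'I_N) (d : state) : Prop :=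
  forall m : 'I_N, m != a -> d m = 0.

Definition dist_decoupled (b a : 'I_N) : Prop :=
  forall (x0 : state) (d : nat -> state),
    (forall k, in_Da a (d k)) ->
    forall k, traj x0 d k b = traj x0 zero_dist k b.

End Game.

Definition quadratic_potential_game (R : realType) (N : nat) (n : 'I_N -> nat)
  (P : forall l : 'I_N, 'M[R]_(n l))
  (Pc : forall l m : 'I_N, 'M[R]_(n l, n m)) : Prop :=
  (forall l, (P l)^T = P l) /\
  (forall l m : 'I_N, l != m -> Pc l m = (Pc m l)^T).

(* Main.v *)
Require Import Defs.
From HB Require Import structures.
From mathcomp Require Import all_boot all_order all_algebra.
From mathcomp Require Import reals.
From mathcomp Require Import ring.
From Stdlib Require Import FunctionalExtensionality.
Set Implicit Arguments. Unset Strict Implicit. Unset Printing Implicit Defensive.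
Import Order.TTheory GRing.Theory Num.Theory.
Local Open Scope ring_scope.

Section Helpers.
Variables (R : realType) (N : nat) (n : 'I_N -> nat).
Variables (P : forall l : 'I_N, 'M[R]_(n l))
          (Pc : forall l m : 'I_N, 'M[R]_(n l, n m))
          (r : forall l : 'I_N, 'cV[R]_(n l))
          (gamma : 'I_N -> R).

Local Notation st := (state R n).

Definition G (x : st) (l : 'I_N) : 'cV[R]_(n l) :=
  P l *m x l + \sum_(m < N | m != l) Pc l m *m x m.

Definition L (x : st) : st := fun l => x l - gamma l *: G x l.

Definition addS (x y : st) : st := fun l => x l + y l.
Definition zS : st := fun l => 0.

Lemma G_add x y l : G (addS x y) l = G x l + G y l.
Proof.
rewrite /G /addS mulmxDr.
under eq_bigr do rewrite mulmxDr.
by rewrite big_split /= addrACA.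
Qed.

Lemma G_sub x y l : G (fun l => x l - y l) l = G x l - G y l.
Proof.
rewrite /G mulmxBr.
under eq_bigr do rewrite mulmxBr.
by rewrite sumrB opprD addrACA.
Qed.

Lemma G_zero l : G zS l = 0.
Proof.
rewrite /G /zS mulmx0 big1 ?addr0 // => m _; exact: mulmx0.
Qed.

Lemma L_add x y : L (addS x y) = addS (L x) (L y).
Proof.
apply: functional_extensionality_dep => l.
rewrite /L G_add /addS scalerDr opprD addrACA //.
Qed.

Lemma L_zero : L zS = zS.
Proof.
apply: functional_extensionality_dep => l.
by rewrite /L G_zero scaler0 subr0.
Qed.

Lemma iter_add j x y : iter j L (addS x y) = addS (iter j L x) (iter j L y).
Proof. by elim: j => //= j ->; rewrite L_add. Qed.

Lemma iter_zero j : iter j L zS = zS.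
Proof. by elim: j => //= j ->; rewrite L_zero. Qed.

Definition err x0 d k : st :=
  fun l => traj P Pc r gamma x0 d k l - traj P Pc r gamma x0 (zero_dist R n) k l.

Lemma err_step x0 d k :
  err x0 d k.+1 = addS (L (err x0 d k)) (fun l => - (gamma l *: d k l)).
Proof.
apply: functional_extensionality_dep => l.
rewrite /err /addS /L /= /step /partial_grad /zero_dist.
rewrite G_sub.
rewrite -/(G (traj P Pc r gamma x0 d k) l) -/(G (traj P Pc r gamma x0 (zero_dist R n) k) l).
set X := traj _ _ _ _ _ _ _ l.
set Y := traj _ _ _ _ _ _ _ l.
set g := G _ l. set h := G _ l.
apply/matrixP => i j; rewrite !mxE; ring.
Qed.

Definition Cp (b a : 'I_N) := forall z : st, in_Da a z -> forall j, iter j L z b = 0.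

Hypothesis gamma_pos : forall l, 0 < gamma l.

Lemma gamma_neq0 l : gamma l != 0.
Proof. by rewrite gt_eqF. Qed.

Lemma dd_Cp b a : dist_decoupled P Pc r gamma b a -> Cp b a.
Proof.
move=> H z Hz j.
pose d := fun t : nat => if t is 0 then (fun l => - ((gamma l)^-1 *: z l)) : st else zS.
have Hd : forall t, in_Da a (d t).
  by case=> [|t] m /= Hm; rewrite /zS // Hz // scaler0 oppr0.
have E : forall k, err zS d k.+1 = iter k L z.
  elim=> [|k IH].
    rewrite err_step.
    have -> : err zS d 0 = zS.
      by apply: functional_extensionality_dep => l; rewrite /err /= subrr.
    rewrite L_zero; apply: functional_extensionality_dep => l.
    rewrite /addS /zS /= add0r scalerN opprK scalerA divff ?gamma_neq0 ?scale1r //.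
  rewrite err_step IH /=; apply: functional_extensionality_dep => l.
  by rewrite /addS /= /zS scaler0 oppr0 addr0.
have := H zS d Hd j.+1.
rewrite -E /err => ->; exact: subrr.
Qed.

Lemma Cp_dd b a : Cp b a -> dist_decoupled P Pc r gamma b a.
Proof.
move=> H x0 d Hd k.
have S : forall k j, iter j L (err x0 d k) b = 0.
  elim=> [|k' IH] j.
    have -> : err x0 d 0 = zS.
      by apply: functional_extensionality_dep => l; rewrite /err /= subrr.
    by rewrite iter_zero.
  rewrite err_step iter_add /addS -iterSr IH add0r.
  apply: H => m Hm; by rewrite Hd // scaler0 oppr0.
apply/eqP; rewrite -subr_eq0; apply/eqP.
exact: (S k 0%N).
Qed.

Definition ip (x y : st) : 'M[R]_1 := \sum_l (gamma l)^-1 *: ((x l)^T *m y l).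

Lemma tr1 (M : 'M[R]_1) : M^T = M.
Proof. by apply/matrixP => i j; rewrite !ord1 mxE. Qed.

Lemma ipC x y : ip x y = ip y x.
Proof.
apply: eq_bigr => l _; congr (_ *: _).
by rewrite -[LHS]tr1 trmx_mul trmxK.
Qed.

Definition Bil (x y : st) : 'M[R]_1 := \sum_l (x l)^T *m G y l.

Lemma ipL_eq x y : ip x (L y) = ip x y - Bil x y.
Proof.
rewrite /ip /Bil -sumrB; apply: eq_bigr => l _.
rewrite /L mulmxBr scalerBr -scalemxAr scalerA mulVf ?gamma_neq0 ?scale1r //.
Qed.

Hypothesis QPG : quadratic_potential_game P Pc.

Lemma BilC x y : Bil x y = Bil y x.
Proof.
case: QPG => HP HPc.
rewrite /Bil /G.
under eq_bigr do rewrite mulmxDr mulmx_sumr.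
under [RHS]eq_bigr do rewrite mulmxDr mulmx_sumr.
rewrite !big_split /=; congr (_ + _).
  apply: eq_bigr => l _.
  by rewrite -[LHS]tr1 !trmx_mul trmxK HP mulmxA.
rewrite (exchange_big_dep xpredT) //=.
apply: eq_bigr => m _; apply: eq_big => [l|l Hl].
  by rewrite eq_sym.
rewrite -[LHS]tr1 !trmx_mul trmxK mulmxA HPc ?trmxK //.
by rewrite eq_sym.
Qed.

Lemma ipL x y : ip x (L y) = ip (L x) y.
Proof.
by rewrite ipL_eq [ip (L x) y]ipC ipL_eq ipC BilC.
Qed.

Lemma ip_iter j x y : ip x (iter j L y) = ip (iter j L x) y.
Proof.
elim: j x => //= j IH x.
by rewrite ipL IH -iterSr.
Qed.

Lemma Cp_sym b a : Cp b a -> Cp a b.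
Proof.
move=> H z Hz j.
set y := iter j L z.
set u := y a.
pose w : st := fun l => (l == a)%:R *: y l.
have Hw : in_Da a w by move=> m Hm; rewrite /w (negPf Hm) scale0r.
have E1 : ip w y = (gamma a)^-1 *: (u^T *m u).
  rewrite /ip (bigD1 a) //= big1 => [|l /negPf Hl].
    by rewrite addr0 /w eqxx scale1r.
  by rewrite /w Hl scale0r trmx0 mul0mx scaler0.
have E2 : ip w y = 0.
  rewrite /y ip_iter /ip big1 // => l _.
  case: (eqVneq l b) => [->|Hl].
    by rewrite (H w Hw j) trmx0 mul0mx scaler0.
  by rewrite Hz // mulmx0 scaler0.
have E3 : u^T *m u = 0.
  apply: (scalerI (invr_neq0 (gamma_neq0 a))); rewrite -E1 E2 scaler0 //.
have E4 : \sum_i u i 0 ^+ 2 = 0.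
  have := congr1 (fun M : 'M[R]_1 => M 0 0) E3; rewrite /= !mxE => E.
  apply: (etrans _ E).
  by apply: eq_bigr => i _; rewrite mxE expr2.
apply/matrixP => i k; rewrite ord1 mxE.
have := @psumr_eq0P _ _ _ _ (fun i _ => sqr_ge0 (u i 0)) E4 i isT.
by move/eqP; rewrite sqrf_eq0 => /eqP.
Qed.

End Helpers.

Theorem corollary1 (R : realType) (N : nat) (n : 'I_N -> nat)
  (P : forall l : 'I_N, 'M[R]_(n l))
  (Pc : forall l m : 'I_N, 'M[R]_(n l, n m))
  (r : forall l : 'I_N, 'cV[R]_(n l))
  (gamma : 'I_N -> R) :
  quadratic_potential_game P Pc ->
  (forall l, 0 < gamma l) ->
  forall i j : 'I_N, i != j ->
    (dist_decoupled P Pc r gamma i j <-> dist_decoupled P Pc r gamma j i).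
Proof.
move=> Q Hg i j _; split=> H.
  apply: (Cp_dd r); apply: (Cp_sym Hg Q); exact: (dd_Cp Hg H).
apply: (Cp_dd r); apply: (Cp_sym Hg Q); exact: (dd_Cp Hg H).
Qed.
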